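(* The cut rule is admissible for system $\mathcal S$: every sequent derivable in $\mathcal S$ has a derivation in $\mathcal S$ without instances of the cut rule.
   Context: Fix countably infinite sets of names and variables and the constructors $\mathsf{pub}$ (unary) and $\mathsf{sign},\mathsf{blind},\langle\cdot,\cdot\rangle,\{\cdot\}_{\cdot}$ (binary). Let $E$ be the union of AC-convergent equational theories $E_1,\dots,E_n$ with pairwise disjoint signatures, all disjoint from the constructors, each containing at most one associative-commutative (AC) binary symbol $\oplus_i$; $E$ is presented by a rewrite system $R_E$ terminating and confluent modulo AC of the $\oplus_i$; $\Sigma_E$ is its signature. Terms: names, variables, $\mathsf{pub}(M)$, $\mathsf{sign}(M,N)$, $\mathsf{blind}(M,N)$, $\langle M,N\rangle$, $\{M\}_N$, $g(M_1,\dots,M_j)$ with $g\in\Sigma_E$; all terms ground. $\equiv$ is equality modulo AC; $\approx_E$ equality modulo $E$. A term is guarded if it is a name, a variable, or headed by a constructor. An $E$-context is a term with holes built only from function symbols of $\Sigma_E$. A sequent $\Gamma\vdash M$ is a finite set $\Gamma$ of terms and a term $M$, all in $R_E$-normal form modulo AC; $\Gamma,M$ means $\Gamma\cup\{M\}$. System $\mathcal S$: (id) $\Gamma\vdash M$ with no premise, if $M\approx_E C[M_1,\dots,M_k]$ for some $E$-context $C$ and $M_1,\dots,M_k\in\Gamma$; (cut) from $\Gamma\vdash M$ and $\Gamma,M\vdash T$ infer $\Gamma\vdash T$; ($p_L$) from $\Gamma,\langle M,N\rangle,M,N\vdash T$ infer $\Gamma,\langle M,N\rangle\vdash T$; ($p_R$)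 from $\Gamma\vdash M$, $\Gamma\vdash N$ infer $\Gamma\vdash\langle M,N\rangle$; ($e_L$) from $\Gamma,\{M\}_K\vdash K$ and $\Gamma,\{M\}_K,M,K\vdash N$ infer $\Gamma,\{M\}_K\vdash N$; ($e_R$) from $\Gamma\vdash M$, $\Gamma\vdash K$ infer $\Gamma\vdash\{M\}_K$; ($\mathsf{sign}_L$) from $\Gamma,\mathsf{sign}(M,K),\mathsf{pub}(L),M\vdash N$ infer $\Gamma,\mathsf{sign}(M,K),\mathsf{pub}(L)\vdash N$, provided $K\equiv L$; ($\mathsf{sign}_R$) from $\Gamma\vdash M$, $\Gamma\vdash K$ infer $\Gamma\vdash\mathsf{sign}(M,K)$; ($\mathsf{blind}_{L1}$) from $\Gamma,\mathsf{blind}(M,K)\vdash K$ and $\Gamma,\mathsf{blind}(M,K),M,K\vdash N$ infer $\Gamma,\mathsf{blind}(M,K)\vdash N$; ($\mathsf{blind}_R$) from $\Gamma\vdash M$, $\Gamma\vdash K$ infer $\Gamma\vdash\mathsf{blind}(M,K)$; ($\mathsf{blind}_{L2}$) from $\Gamma,\mathsf{sign}(\mathsf{blind}(M,R),K)\vdash R$ and $\Gamma,\mathsf{sign}(\mathsf{blind}(M,R),K),\mathsf{sign}(M,K),R\vdash N$ infer $\Gamma,\mathsf{sign}(\mathsf{blind}(M,R),K)\vdash N$; ($gs$) from $\Gamma\vdash A$ and $\Gamma,A\vdash M$ infer $\Gamma\vdash M$, provided $A$ is a guarded subterm of a term in $\Gamma\cup\{M\}$. *)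

(* Defs.v *)
(* Intruder-deduction sequent system S modulo a union E of
   AC-convergent equational theories with disjoint signatures. *)
From Stdlib Require Import List Relations.
Import ListNotations.
Set Implicit Arguments.

Record signature := Signature {
  sym : Type;
  arity : sym -> nat;
  theory : sym -> nat;        (* index i of the theory E_i the symbol belongs to *)
  isAC : sym -> Prop
}.

Inductive term (F : Type) : Type :=
| Name (a : nat)
| Var (x : nat)
| Pub (M : term F)
| Sign (M K : term F)
| Blind (M K : term F)
| Pair (M N : term F)
| Enc (M K : term F)
| App (g : F) (args : list (term F)).
Arguments Name {F} a.
Arguments Var {F} x.

Inductive wf_term {S : signature} : term (sym S) -> Prop :=
| wf_name a : wf_term (Name a)
| wf_var x : wf_term (Var x)
| wf_pub M : wf_term M -> wf_term (Pub M)
| wf_sign M K : wf_term M -> wf_term K -> wf_term (Sign M K)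
| wf_blind M K : wf_term M -> wf_term K -> wf_term (Blind M K)
| wf_pair M N : wf_term M -> wf_term N -> wf_term (Pair M N)
| wf_enc M K : wf_term M -> wf_term K -> wf_term (Enc M K)
| wf_app g l : length l = arity S g -> Forall wf_term l -> wf_term (App g l).

Inductive pat (F : Type) : Type :=
| PVar (x : nat)
| PApp (g : F) (args : list (pat F)).
Arguments PVar {F} x.

Fixpoint inst {F : Type} (s : nat -> term F) (p : pat F) : term F :=
  match p with
  | PVar x => s x
  | PApp g l => App g (map (inst s) l)
  end.

Inductive pat_over {F : Type} (P : F -> Prop) : pat F -> Prop :=
| po_var x : pat_over P (PVar x)
| po_app g l : P g -> Forall (pat_over P) l -> pat_over P (PApp g l).

Inductive pat_wf {S : signature} : pat (sym S) -> Prop :=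
| pw_var x : pat_wf (PVar x)
| pw_app g l : length l = arity S g -> Forall pat_wf l -> pat_wf (PApp g l).

Inductive ctx_closure {F : Type} (R : term F -> term F -> Prop) : term F -> term F -> Prop :=
| cc_base s t : R s t -> ctx_closure R s t
| cc_pub s t : ctx_closure R s t -> ctx_closure R (Pub s) (Pub t)
| cc_sign1 s t u : ctx_closure R s t -> ctx_closure R (Sign s u) (Sign t u)
| cc_sign2 s t u : ctx_closure R s t -> ctx_closure R (Sign u s) (Sign u t)
| cc_blind1 s t u : ctx_closure R s t -> ctx_closure R (Blind s u) (Blind t u)
| cc_blind2 s t u : ctx_closure R s t -> ctx_closure R (Blind u s) (Blind u t)
| cc_pair1 s t u : ctx_closure R s t -> ctx_closure R (Pair s u) (Pair t u)
| cc_pair2 s t u : ctx_closure R s t -> ctx_closure R (Pair u s) (Pair u t)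
| cc_enc1 s t u : ctx_closure R s t -> ctx_closure R (Enc s u) (Enc t u)
| cc_enc2 s t u : ctx_closure R s t -> ctx_closure R (Enc u s) (Enc u t)
| cc_app g l1 l2 s t : ctx_closure R s t ->
    ctx_closure R (App g (l1 ++ s :: l2)) (App g (l1 ++ t :: l2)).

Definition cong_eq {F : Type} (R : term F -> term F -> Prop) : term F -> term F -> Prop :=
  clos_refl_sym_trans (term F) (ctx_closure R).

Inductive ac_axiom {F : Type} (ac : F -> Prop) : term F -> term F -> Prop :=
| ac_comm f a b : ac f -> ac_axiom ac (App f [a; b]) (App f [b; a])
| ac_assoc f a b c : ac f ->
    ac_axiom ac (App f [App f [a; b]; c]) (App f [a; App f [b; c]]).

Definition rule_axiom {F : Type} (R : pat F -> pat F -> Prop) (s t : term F) : Prop :=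
  exists l r (sigma : nat -> term F), R l r /\ s = inst sigma l /\ t = inst sigma r.

Definition ac_eq {F : Type} (ac : F -> Prop) := cong_eq (ac_axiom ac).

Definition eq_mod {F : Type} (R : pat F -> pat F -> Prop) (ac : F -> Prop) :=
  cong_eq (fun s t => ac_axiom ac s t \/ rule_axiom R s t).

Definition step {F : Type} (R : pat F -> pat F -> Prop) (ac : F -> Prop) (s t : term F) : Prop :=
  exists s' t', ac_eq ac s s' /\ ctx_closure (rule_axiom R) s' t' /\ ac_eq ac t' t.

Definition normal {F : Type} R ac (s : term F) : Prop := forall t, ~ step R ac s t.

Definition terminating_mod {F : Type} R ac : Prop :=
  well_founded (fun t s : term F => step R ac s t).

Definition confluent_mod {F : Type} R ac : Prop :=
  forall s t : term F, eq_mod R ac s t ->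
    exists u v, clos_refl_trans _ (step R ac) s u /\
                clos_refl_trans _ (step R ac) t v /\ ac_eq ac u v.

Definition convergent_mod {F : Type} R ac : Prop :=
  @terminating_mod F R ac /\ @confluent_mod F R ac.

Definition R_E {S : signature} (rules : list (pat (sym S) * pat (sym S))) l r : Prop :=
  In (l, r) rules.

Definition R_i {S : signature} (rules : list (pat (sym S) * pat (sym S))) (i : nat) l r : Prop :=
  In (l, r) rules /\ pat_over (fun g => theory S g = i) l /\ pat_over (fun g => theory S g = i) r.

Definition AC_i (S : signature) (i : nat) (f : sym S) : Prop := isAC S f /\ theory S f = i.

Definition admissible_theory (S : signature) (n : nat)
    (rules : list (pat (sym S) * pat (sym S))) : Prop :=
  (* the signatures of E_0..E_{n-1} partition Sigma_E *)
  (forall g, theory S g < n) /\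
  (forall f, isAC S f -> arity S f = 2) /\
  (forall f g, isAC S f -> isAC S g -> theory S f = theory S g -> f = g) /\
  (forall l r, In (l, r) rules -> pat_wf l /\ pat_wf r /\
       exists i, pat_over (fun g => theory S g = i) l /\ pat_over (fun g => theory S g = i) r) /\
  (forall i, i < n -> convergent_mod (R_i rules i) (AC_i S i)) /\
  convergent_mod (R_E rules) (isAC S).

Section System.
Variable S : signature.
Variable rules : list (pat (sym S) * pat (sym S)).
Notation T := (term (sym S)).

Definition is_sequent (G : list T) (M : T) : Prop :=
  Forall (fun t => wf_term t /\ normal (R_E rules) (isAC S) t) (M :: G).

Definition E_eq := eq_mod (R_E rules) (isAC S).

(** t = C[M1,...,Mk] for an E-context C and M1..Mk in G *)
Inductive E_ctx_over (G : list T) : T -> Prop :=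
| ec_hole M : In M G -> E_ctx_over G M
| ec_app g l : length l = arity S g -> Forall (E_ctx_over G) l -> E_ctx_over G (App g l).

Inductive subterm (A : T) : T -> Prop :=
| st_refl : subterm A A
| st_pub M : subterm A M -> subterm A (Pub M)
| st_sign1 M K : subterm A M -> subterm A (Sign M K)
| st_sign2 M K : subterm A K -> subterm A (Sign M K)
| st_blind1 M K : subterm A M -> subterm A (Blind M K)
| st_blind2 M K : subterm A K -> subterm A (Blind M K)
| st_pair1 M K : subterm A M -> subterm A (Pair M K)
| st_pair2 M K : subterm A K -> subterm A (Pair M K)
| st_enc1 M K : subterm A M -> subterm A (Enc M K)
| st_enc2 M K : subterm A K -> subterm A (Enc M K)
| st_app g l u : In u l -> subterm A u -> subterm A (App g l).

Definition guarded (t : T) : Prop :=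
  match t with App _ _ => False | _ => True end.

(** Contexts G are lists read as
    finite sets; "G, M" is [M :: G]; every node must be a sequent. *)
Inductive derivable (with_cut : bool) : list T -> T -> Prop :=
| d_id G M C : is_sequent G M -> E_ctx_over G C -> E_eq M C -> derivable with_cut G M
| d_cut G M N : with_cut = true -> is_sequent G N ->
    derivable with_cut G M -> derivable with_cut (M :: G) N -> derivable with_cut G N
| d_pL G M N U : is_sequent G U -> In (Pair M N) G ->
    derivable with_cut (M :: N :: G) U -> derivable with_cut G U
| d_pR G M N : is_sequent G (Pair M N) ->
    derivable with_cut G M -> derivable with_cut G N -> derivable with_cut G (Pair M N)
| d_eL G M K N : is_sequent G N -> In (Enc M K) G ->
    derivable with_cut G K -> derivable with_cut (M :: K :: G) N -> derivable with_cut G N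
| d_eR G M K : is_sequent G (Enc M K) ->
    derivable with_cut G M -> derivable with_cut G K -> derivable with_cut G (Enc M K)
| d_signL G M K L N : is_sequent G N -> In (Sign M K) G -> In (Pub L) G ->
    ac_eq (isAC S) K L ->
    derivable with_cut (M :: G) N -> derivable with_cut G N
| d_signR G M K : is_sequent G (Sign M K) ->
    derivable with_cut G M -> derivable with_cut G K -> derivable with_cut G (Sign M K)
| d_blindL1 G M K N : is_sequent G N -> In (Blind M K) G ->
    derivable with_cut G K -> derivable with_cut (M :: K :: G) N -> derivable with_cut G N
| d_blindR G M K : is_sequent G (Blind M K) ->
    derivable with_cut G M -> derivable with_cut G K -> derivable with_cut G (Blind M K)
| d_blindL2 G M R K N : is_sequent G N -> In (Sign (Blind M R) K) G ->
    derivable with_cut G R -> derivable with_cut (Sign M K :: R :: G) N ->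
    derivable with_cut G N
| d_gs G A M : is_sequent G M -> guarded A ->
    (exists u, In u (M :: G) /\ subterm A u) ->
    derivable with_cut G A -> derivable with_cut (A :: G) M -> derivable with_cut G M.

End System.

(* Main.v *)
Require Import Defs.
From Stdlib Require Import List Relations Lia Classical ClassicalEpsilon Wf_nat.
Import ListNotations.
Set Implicit Arguments.

Section Cut.
Variable Sg : signature.
Variable rules : list (pat (sym Sg) * pat (sym Sg)).
Notation T := (term (sym Sg)).
Notation der := (derivable Sg rules false).
Notation EQ := (E_eq Sg rules).
Notation ACQ := (ac_eq (isAC Sg)).
Notation normal_ := (normal (R_E rules) (isAC Sg)).

Fixpoint size (t : T) : nat :=
  match t with
  | Name _ | Var _ => 1
  | Pub M => S (size M)
  | Sign M K | Blind M K | Pair M K | Enc M K => S (size M + size K)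
  | App g l => S ((fix sz (l : list T) : nat := match l with [] => 0 | x :: r => size x + sz r end) l)
  end.

Fixpoint size_list (l : list T) : nat := match l with [] => 0 | x :: r => size x + size_list r end.

Lemma size_App g l : size (App g l) = S (size_list l).
Proof. simpl. induction l; simpl; congruence. Qed.

Lemma size_In x l : In x l -> size x <= size_list l.
Proof. induction l; simpl; [tauto|]. intros [H|H]; subst; try lia. specialize (IHl H). lia. Qed.

Lemma subterm_size A u : subterm Sg A u -> A = u \/ size A < size u.
Proof.
  induction 1; auto; right; try (simpl; destruct IHsubterm; subst; lia).
  rewrite size_App. apply size_In in H.
  destruct IHsubterm; subst; lia.
Qed.

Lemma subterm_trans A B C : subterm Sg A B -> subterm Sg B C -> subterm Sg A C.
Proof. intros H1 H2; induction H2; try (econstructor; eauto; fail). assumption. Qed.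

Section TI.
Variable P : T -> Prop.
Hypotheses (Hn : forall a, P (Name a)) (Hv : forall x, P (Var x)) (Hp : forall M, P M -> P (Pub M))
  (Hs : forall M K, P M -> P K -> P (Sign M K)) (Hb : forall M K, P M -> P K -> P (Blind M K))
  (Hpa : forall M K, P M -> P K -> P (Pair M K)) (He : forall M K, P M -> P K -> P (Enc M K))
  (Ha : forall g l, Forall P l -> P (App g l)).
Fixpoint tind (t : T) : P t :=
  match t with
  | Name a => Hn a | Var x => Hv x | Pub M => Hp (tind M)
  | Sign M K => Hs (tind M) (tind K) | Blind M K => Hb (tind M) (tind K)
  | Pair M K => Hpa (tind M) (tind K) | Enc M K => He (tind M) (tind K)
  | App g l => Ha g ((fix F (l : list T) : Forall P l :=
       match l with [] => Forall_nil _ | x :: r => Forall_cons _ (tind x) (F r) end) l)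
  end.
End TI.

Ltac cctac := intros; first [ apply cc_pub; assumption | apply cc_sign1; assumption | apply cc_sign2; assumption
  | apply cc_blind1; assumption | apply cc_blind2; assumption | apply cc_pair1; assumption | apply cc_pair2; assumption
  | apply cc_enc1; assumption | apply cc_enc2; assumption | apply cc_app; assumption].
Lemma rst_map (R : T -> T -> Prop) (f : T -> T) :
  (forall s t, ctx_closure R s t -> ctx_closure R (f s) (f t)) ->
  forall s t, cong_eq R s t -> cong_eq R (f s) (f t).
Proof.
  intros Hf s t H; induction H.
  - apply rst_step; auto.
  - apply rst_refl.
  - apply rst_sym; auto.
  - eapply rst_trans; eauto.
Qed.

Lemma cong_refl R (s : T) : cong_eq R s s. Proof. apply rst_refl. Qed.
Lemma cong_sym R (s t : T) : cong_eq R s t -> cong_eq R t s. Proof. apply rst_sym. Qed.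
Lemma cong_trans R (s t u : T) : cong_eq R s t -> cong_eq R t u -> cong_eq R s u. Proof. apply rst_trans. Qed.

Lemma cong_pub R (s t : T) : cong_eq R s t -> cong_eq R (Pub s) (Pub t).
Proof. intros. refine (@rst_map _ (fun x => Pub x) _ _ _ _); [cctac| assumption]. Qed.
Lemma cong_sign R (s t u v : T) : cong_eq R s t -> cong_eq R u v -> cong_eq R (Sign s u) (Sign t v).
Proof. intros. apply cong_trans with (Sign t u).
  refine (@rst_map _ (fun x => Sign x u) _ _ _ _); [cctac| assumption].
  refine (@rst_map _ (fun x => Sign t x) _ _ _ _); [cctac| assumption]. Qed.
Lemma cong_blind R (s t u v : T) : cong_eq R s t -> cong_eq R u v -> cong_eq R (Blind s u) (Blind t v).
Proof. intros. apply cong_trans with (Blind t u).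
  refine (@rst_map _ (fun x => Blind x u) _ _ _ _); [cctac| assumption].
  refine (@rst_map _ (fun x => Blind t x) _ _ _ _); [cctac| assumption]. Qed.
Lemma cong_pair R (s t u v : T) : cong_eq R s t -> cong_eq R u v -> cong_eq R (Pair s u) (Pair t v).
Proof. intros. apply cong_trans with (Pair t u).
  refine (@rst_map _ (fun x => Pair x u) _ _ _ _); [cctac| assumption].
  refine (@rst_map _ (fun x => Pair t x) _ _ _ _); [cctac| assumption]. Qed.
Lemma cong_enc R (s t u v : T) : cong_eq R s t -> cong_eq R u v -> cong_eq R (Enc s u) (Enc t v).
Proof. intros. apply cong_trans with (Enc t u).
  refine (@rst_map _ (fun x => Enc x u) _ _ _ _); [cctac| assumption].
  refine (@rst_map _ (fun x => Enc t x) _ _ _ _); [cctac| assumption]. Qed.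
Lemma cong_app1 R g l1 l2 (s t : T) : cong_eq R s t ->
  cong_eq R (App g (l1 ++ s :: l2)) (App g (l1 ++ t :: l2)).
Proof. intros. refine (@rst_map _ (fun x => App g (l1 ++ x :: l2)) _ _ _ _); [cctac|assumption]. Qed.
Lemma cong_app R g (l l' : list T) : Forall2 (cong_eq R) l l' -> cong_eq R (App g l) (App g l').
Proof.
  intros H. cut (forall pre, cong_eq R (App g (pre ++ l)) (App g (pre ++ l'))).
  { intros H'; apply (H' []). }
  induction H; intros pre. apply cong_refl.
  eapply cong_trans. apply cong_app1; eauto.
  specialize (IHForall2 (pre ++ [y])). rewrite <- !app_assoc in IHForall2. exact IHForall2.
Qed.

Lemma ctx_mono (R R' : T -> T -> Prop) : (forall s t, R s t -> R' s t) ->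
  forall s t, ctx_closure R s t -> ctx_closure R' s t.
Proof. intros HR s t H; induction H; [apply cc_base; auto| cctac ..]. Qed.

Lemma cong_mono (R R' : T -> T -> Prop) : (forall s t, R s t -> R' s t) ->
  forall s t, cong_eq R s t -> cong_eq R' s t.
Proof.
  intros HR s t H; induction H.
  - apply rst_step. eapply ctx_mono; eauto.
  - apply rst_refl. - apply rst_sym; auto. - eapply rst_trans; eauto.
Qed.

Lemma ac_E (s t : T) : ACQ s t -> EQ s t.
Proof. apply cong_mono. intros; left; auto. Qed.

Definition Qrel (s t : T) : Prop :=
  match s, t with
  | Name a, Name b => a = b | Var a, Var b => a = b | Pub a, Pub b => ACQ a b
  | Sign a b, Sign c d => ACQ a c /\ ACQ b d
  | Blind a b, Blind c d => ACQ a c /\ ACQ b d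
  | Pair a b, Pair c d => ACQ a c /\ ACQ b d
  | Enc a b, Enc c d => ACQ a c /\ ACQ b d
  | App _ _, App _ _ => True
  | _, _ => False
  end.

Lemma ac_Q (s t : T) : ACQ s t -> Qrel s t.
Proof.
  unfold ac_eq, cong_eq. intros H; induction H.
  - destruct H; simpl; try (destruct H; simpl; auto; fail);
      repeat split; try apply rst_refl; apply rst_step; auto.
  - destruct x; simpl; repeat split; try apply rst_refl.
  - destruct x, y; simpl in *; try tauto; try congruence; intuition (apply rst_sym; auto).
  - destruct x, y; simpl in *; try tauto; destruct z; simpl in *; try tauto; try congruence;
      intuition (eapply rst_trans; eauto).
Qed.

Lemma step_lift (f : T -> T) :
  (forall R s t, ctx_closure R s t -> ctx_closure R (f s) (f t)) ->
  forall s t, step (R_E rules) (isAC Sg) s t -> step (R_E rules) (isAC Sg) (f s) (f t).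
Proof.
  intros Hf s t [s' [t' [H1 [H2 H3]]]]. exists (f s'), (f t'). split; [|split].
  - refine (@rst_map _ f _ _ _ H1); auto.
  - auto.
  - refine (@rst_map _ f _ _ _ H3); auto.
Qed.

Lemma normal_sub A u : subterm Sg A u -> normal_ u -> normal_ A.
Proof.
  induction 1; intros Hn; auto; apply IHsubterm; intros t Hs; 
  match goal with
  | H : In _ _ |- _ => destruct (in_split _ _ H) as [l1 [l2 ->]];
       apply (Hn (App g (l1 ++ t :: l2)));
       refine (@step_lift (fun x => App g (l1 ++ x :: l2)) _ _ _ Hs); intros; apply cc_app; auto
  | |- _ => idtac
  end.
  all: first [ apply (Hn (Pub t)); refine (@step_lift (fun x => Pub x) _ _ _ Hs); cctac
             | apply (Hn (Sign t K)); refine (@step_lift (fun x => Sign x K) _ _ _ Hs); cctac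
             | apply (Hn (Sign M t)); refine (@step_lift (fun x => Sign M x) _ _ _ Hs); cctac
             | apply (Hn (Blind t K)); refine (@step_lift (fun x => Blind x K) _ _ _ Hs); cctac
             | apply (Hn (Blind M t)); refine (@step_lift (fun x => Blind M x) _ _ _ Hs); cctac
             | apply (Hn (Pair t K)); refine (@step_lift (fun x => Pair x K) _ _ _ Hs); cctac
             | apply (Hn (Pair M t)); refine (@step_lift (fun x => Pair M x) _ _ _ Hs); cctac
             | apply (Hn (Enc t K)); refine (@step_lift (fun x => Enc x K) _ _ _ Hs); cctac
             | apply (Hn (Enc M t)); refine (@step_lift (fun x => Enc M x) _ _ _ Hs); cctac ].
Qed.

Lemma wf_sub A u : subterm Sg A u -> wf_term u -> wf_term A.
Proof.
  induction 1; intros Hw; auto; apply IHsubterm; inversion Hw; subst; auto.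
  rewrite Forall_forall in *; auto.
Qed.

Definition nwf (G : list T) := Forall (fun t => wf_term t /\ normal_ t) G.

Lemma nwf_sub A u : subterm Sg A u -> wf_term u /\ normal_ u -> wf_term A /\ normal_ A.
Proof. intros H [H1 H2]; split; [eapply wf_sub|eapply normal_sub]; eauto. Qed.

Lemma der_seq b G M : derivable Sg rules b G M -> is_sequent Sg rules G M.
Proof. destruct 1; auto. Qed.

Lemma seq_goal G M : is_sequent Sg rules G M -> wf_term M /\ normal_ M.
Proof. intros H; exact (Forall_inv H). Qed.
Lemma seq_ctx G M : is_sequent Sg rules G M -> nwf G.
Proof. intros H; exact (Forall_inv_tail H). Qed.
Lemma mk_seq G M : wf_term M /\ normal_ M -> nwf G -> is_sequent Sg rules G M.
Proof. intros; constructor; auto. Qed.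
Lemma nwf_In G x : nwf G -> In x G -> wf_term x /\ normal_ x.
Proof. intros H Hi; unfold nwf in H; rewrite Forall_forall in H; auto. Qed.
Lemma nwf_cons G x : wf_term x /\ normal_ x -> nwf G -> nwf (x :: G).
Proof. intros; constructor; auto. Qed.

Section EI.
Variable G : list T.
Variable P : T -> Prop.
Hypothesis Hh : forall M, In M G -> P M.
Hypothesis Ha : forall g l, length l = arity Sg g -> Forall (E_ctx_over Sg G) l -> Forall P l -> P (App g l).
Fixpoint ectx_ind2 (t : T) (H : E_ctx_over Sg G t) {struct H} : P t :=
  match H with
  | ec_hole _ _ M h => Hh M h
  | ec_app g hl hf => Ha g hl hf ((fix F l (hf : Forall (E_ctx_over Sg G) l) : Forall P l :=
       match hf with Forall_nil _ => Forall_nil _ | Forall_cons x hx hl => Forall_cons _ (ectx_ind2 hx) (F _ hl) end) _ hf)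
  end.
End EI.

Lemma ectx_mono G G' C : E_ctx_over Sg G C -> incl G G' -> E_ctx_over Sg G' C.
Proof.
  intros H Hi. refine (@ectx_ind2 G (fun C => E_ctx_over Sg G' C) _ _ C H).
  - intros; apply ec_hole; auto.
  - intros; apply ec_app; auto.
Qed.

Ltac inc := unfold incl in *; let a := fresh "a" in let Ha := fresh "Ha" in intros a Ha; simpl in *;
  repeat match goal with
  | H : _ \/ _ |- _ => destruct H
  | H : forall x, In x ?X -> _, H' : In ?y ?X |- _ =>
      let h := fresh in pose proof (H y H') as h; clear H'
  end; solve [tauto | intuition congruence].

Lemma nwf_incl G G' : nwf G' -> incl G G' -> nwf G.
Proof. unfold nwf; rewrite !Forall_forall; auto. Qed.

Lemma nwf_app2 x y G : nwf (x :: y :: G) -> forall G', nwf G' -> nwf (x :: y :: G').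
Proof. intros H G' H'. inversion H; subst. inversion H3; subst. constructor; auto. Qed.
Lemma nwf_app1 x G : nwf (x :: G) -> forall G', nwf G' -> nwf (x :: G').
Proof. intros H G' H'. inversion H; subst. constructor; auto. Qed.

Ltac seqt := apply mk_seq; [eapply seq_goal; eassumption | assumption].
Ltac wk_prem := match goal with
 | D : derivable _ _ _ (?x :: ?y :: ?G) ?N, IH : forall G', incl (?x :: ?y :: ?G) G' -> _ |- derivable _ _ _ (?x :: ?y :: ?G') ?N =>
   apply IH; [inc | eapply nwf_app2; [apply (seq_ctx (der_seq D)) | eauto]]
 | D : derivable _ _ _ (?x :: ?G) ?N, IH : forall G', incl (?x :: ?G) G' -> _ |- derivable _ _ _ (?x :: ?G') ?N =>
   apply IH; [inc | eapply nwf_app1; [apply (seq_ctx (der_seq D)) | eauto]]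
 | IH : forall G', incl ?G G' -> nwf G' -> derivable _ _ _ G' ?N |- derivable _ _ _ ?G' ?N => apply IH; auto
 end.

Lemma weaken b G M : derivable Sg rules b G M -> forall G', incl G G' -> nwf G' -> derivable Sg rules b G' M.
Proof.
  induction 1 as [G M C Hs Hc He|G M N Hb Hs D1 IH1 D2 IH2|G M N U Hs Hin D IH|G M N Hs D1 IH1 D2 IH2
    |G M K N Hs Hin D1 IH1 D2 IH2|G M K Hs D1 IH1 D2 IH2|G M K L N Hs Hin Hin2 Hac D IH|G M K Hs D1 IH1 D2 IH2
    |G M K N Hs Hin D1 IH1 D2 IH2|G M K Hs D1 IH1 D2 IH2|G M R K N Hs Hin D1 IH1 D2 IH2
    |G A M Hs Hg Hex D1 IH1 D2 IH2]; intros G' Hi Hn.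
  - eapply d_id; [seqt | eapply ectx_mono; eauto | eauto].
  - eapply d_cut with (M := M); [auto | seqt | wk_prem | wk_prem].
  - eapply d_pL with (M := M) (N := N); [seqt | auto | wk_prem].
  - eapply d_pR; [seqt | wk_prem | wk_prem].
  - eapply d_eL with (M := M) (K := K); [seqt | auto | wk_prem | wk_prem].
  - eapply d_eR; [seqt | wk_prem | wk_prem].
  - eapply d_signL with (M := M) (K := K) (L := L); [seqt | auto | auto | auto | wk_prem].
  - eapply d_signR; [seqt | wk_prem | wk_prem].
  - eapply d_blindL1 with (M := M) (K := K); [seqt | auto | wk_prem | wk_prem].
  - eapply d_blindR; [seqt | wk_prem | wk_prem].
  - eapply d_blindL2 with (M := M) (K := K) (R := R); [seqt | auto | wk_prem | wk_prem].
  - eapply d_gs with (A := A); [seqt | auto | | wk_prem | wk_prem].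
    destruct Hex as [u [Hu Hsu]]. exists u; split; auto. destruct Hu; [left|right]; auto.
Qed.

Lemma ctx_subst M G G2 C D : E_ctx_over Sg (M :: G) C -> E_ctx_over Sg G2 D -> EQ D M -> incl G G2 ->
  exists C', E_ctx_over Sg G2 C' /\ EQ C C'.
Proof.
  intros H HD HDM Hi.
  refine (@ectx_ind2 (M :: G) (fun C => exists C', E_ctx_over Sg G2 C' /\ EQ C C') _ _ C H).
  - intros X [->|HX]. exists D; split; auto. apply cong_sym; auto.
    exists X; split. apply ec_hole; auto. apply cong_refl.
  - intros g l Hl _ Hf.
    assert (exists l', Forall2 (fun a b => E_ctx_over Sg G2 b /\ EQ a b) l l') as [l' Hl'].
    { clear Hl. induction Hf. exists []; constructor. destruct H0 as [x' Hx'].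
      destruct IHHf as [l' Hl']. exists (x' :: l'); constructor; auto. }
    exists (App g l'). split.
    + apply ec_app. rewrite <- Hl. symmetry. eapply Forall2_length; eauto.
      clear Hl Hf. induction Hl'; constructor; tauto.
    + apply cong_app. clear Hl Hf. induction Hl'; constructor; tauto.
Qed.

Section HE.
Hypothesis Hterm : terminating_mod (R_E rules) (isAC Sg).
Hypothesis Hconf : confluent_mod (R_E rules) (isAC Sg).

Lemma no_var_lhs x r : ~ In (PVar x, r) rules.
Proof.
  intros Hin. apply (fun H => H (Hterm (Name 0))). generalize (@Name (sym Sg) 0).
  intros t H; induction H as [t _ IH].
  apply (IH (inst (fun _ => t) r)).
  exists t, (inst (fun _ => t) r). split; [apply rst_refl|split; [|apply rst_refl]].
  apply cc_base. exists (PVar x), r, (fun _ => t). split; auto.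
Qed.

Lemma name_normal a : normal_ (Name a).
Proof.
  intros t [s' [t' [H1 [H2 H3]]]]. apply ac_Q in H1.
  destruct s'; simpl in H1; try contradiction. subst.
  inversion H2; subst. destruct H as [l [r [sg [Hr [He _]]]]].
  destruct l; simpl in He; [|discriminate]. eapply no_var_lhs; eauto.
Qed.

Lemma rt_normal s u : clos_refl_trans _ (step (R_E rules) (isAC Sg)) s u -> normal_ s -> s = u.
Proof.
  induction 1; intros Hn; auto.
  - exfalso; eapply Hn; eauto.
  - specialize (IHclos_refl_trans1 Hn); subst. auto.
Qed.

Lemma conf_normal s t : normal_ s -> normal_ t -> EQ s t -> ACQ s t.
Proof.
  intros Hs Ht H. destruct (Hconf H) as [u [v [Hu [Hv Huv]]]].
  apply rt_normal in Hu; auto. apply rt_normal in Hv; auto. subst; auto.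
Qed.
End HE.

Ltac stc := first [ apply st_pub; assumption | apply st_sign1; assumption | apply st_sign2; assumption
  | apply st_blind1; assumption | apply st_blind2; assumption | apply st_pair1; assumption | apply st_pair2; assumption
  | apply st_enc1; assumption | apply st_enc2; assumption].

Section PhiS.
Variable M d : T.
Notation dec := excluded_middle_informative.
Fixpoint phi (t : T) : T :=
  match t with
  | App g l => App g (map phi l)
  | Name a => if dec (EQ (Name a) M) then d else Name a
  | Var a => if dec (EQ (Var a) M) then d else Var a
  | Pub a => if dec (EQ (Pub a) M) then d else Pub (phi a)
  | Sign a b => if dec (EQ (Sign a b) M) then d else Sign (phi a) (phi b)
  | Blind a b => if dec (EQ (Blind a b) M) then d else Blind (phi a) (phi b)
  | Pair a b => if dec (EQ (Pair a b) M) then d else Pair (phi a) (phi b)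
  | Enc a b => if dec (EQ (Enc a b) M) then d else Enc (phi a) (phi b)
  end.

Fixpoint phi_inst (sg : nat -> T) (p : pat (sym Sg)) : phi (inst sg p) = inst (fun x => phi (sg x)) p.
Proof.
  destruct p as [x|g l]; simpl; auto. f_equal. rewrite map_map.
  induction l as [|a l IH]; simpl; auto. rewrite IH. f_equal. apply phi_inst.
Qed.

Lemma dec2 (A B X Y : T) : EQ A B -> EQ X Y ->
  EQ (if dec (EQ A M) then d else X) (if dec (EQ B M) then d else Y).
Proof.
  intros HAB HXY. destruct (dec (EQ A M)) as [e|n], (dec (EQ B M)) as [e'|n']; auto; try apply cong_refl.
  - exfalso; apply n'. eapply cong_trans; [apply cong_sym|]; eauto.
  - exfalso; apply n. eapply cong_trans; eauto.
Qed.

Lemma phi_step s t : ctx_closure (fun s t => ac_axiom (isAC Sg) s t \/ rule_axiom (R_E rules) s t) s t ->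
  EQ (phi s) (phi t).
Proof.
  intros H. induction H.
  1: { apply rst_step, cc_base. destruct H as [H|[l [r [sg [Hr [-> ->]]]]]].
    + left. destruct H; simpl; constructor; auto.
    + right. rewrite !phi_inst. exists l, r, (fun x => phi (sg x)); auto. }
  1: { assert (EQ (Pub s) (Pub t)) by (apply cong_pub, rst_step; auto).
    simpl. destruct (dec (EQ (Pub s) M)), (dec (EQ (Pub t) M)); try apply cong_refl.
    + exfalso; apply n; eapply cong_trans; [apply cong_sym|]; eauto.
    + exfalso; apply n; eapply cong_trans; eauto.
    + apply cong_pub; auto. }
  all: try (simpl; rewrite !map_app; simpl; apply cong_app1; auto; fail).
  all: match goal with |- EQ (phi ?A) (phi ?B) =>
         assert (HAB : EQ A B) by (first [apply cong_sign|apply cong_blind|apply cong_pair|apply cong_enc];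
                             first [solve [apply rst_step; auto]| apply cong_refl]);
         simpl; apply dec2; [exact HAB|];
         first [apply cong_sign|apply cong_blind|apply cong_pair|apply cong_enc]; auto; apply cong_refl end.
Qed.

Lemma phi_E s t : EQ s t -> EQ (phi s) (phi t).
Proof.
  intros H; induction H.
  - apply phi_step; auto.
  - apply cong_refl. - apply cong_sym; auto. - eapply cong_trans; eauto.
Qed.

Lemma phi_id t : (forall B, subterm Sg B t -> guarded Sg B -> ~ EQ B M) -> phi t = t.
Proof.
  induction t using tind; intros Hb.
  8: { simpl. f_equal. induction H; simpl; auto. rewrite H, IHForall; auto.
       - intros B HB HgB; inversion HB; subst; [contradiction|].
         apply Hb; auto. apply st_app with u; simpl; auto.
       - intros B HB; apply Hb. apply st_app with x; simpl; auto. }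
  all: simpl; destruct (dec _) as [e|_]; [exfalso; eapply Hb; [apply st_refl|exact I|exact e]|].
  all: try reflexivity.
  all: try (rewrite IHt; [reflexivity|]; intros; apply Hb; auto; stc; fail).
  all: rewrite IHt1, IHt2; [reflexivity| |]; intros; apply Hb; auto; stc.
Qed.

Lemma phi_M : guarded Sg M -> phi M = d.
Proof.
  intros Hg. destruct M eqn:HM; simpl in *; try contradiction;
  destruct (dec _) as [e|n]; auto; exfalso; apply n; rewrite HM; apply cong_refl.
Qed.

Lemma phi_ctx G C : E_ctx_over Sg (M :: G) C -> (forall g, In g G -> phi g = g) -> guarded Sg M ->
  E_ctx_over Sg (d :: G) (phi C).
Proof.
  intros H HG Hg.
  refine (@ectx_ind2 (M :: G) (fun C => E_ctx_over Sg (d :: G) (phi C)) _ _ C H).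
  - intros X [<-|HX]. rewrite phi_M; auto. apply ec_hole; left; auto.
    rewrite HG; auto. apply ec_hole; right; auto.
  - intros g l Hl _ Hf. simpl. apply ec_app. rewrite length_map; auto.
    apply Forall_map; auto.
Qed.

Lemma phi_ctx_id G C : E_ctx_over Sg G C -> (forall g, In g G -> phi g = g) -> phi C = C.
Proof.
  intros H HG.
  refine (@ectx_ind2 G (fun C => phi C = C) _ _ C H).
  - intros X HX; auto.
  - intros g l _ _ Hf. simpl. f_equal. induction Hf; simpl; auto. rewrite H0, IHHf; auto.
Qed.
End PhiS.

Definition cutP (A : T) := forall G N, der G A -> der (A :: G) N -> der G N.

Lemma id_eq G X Y : In X G -> EQ Y X -> nwf G -> wf_term Y /\ normal_ Y -> der G Y.
Proof. intros Hi He Hn Hy. eapply d_id with (C := X); [apply mk_seq; auto| apply ec_hole; auto| auto]. Qed.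

Lemma normal_ac s t : ACQ s t -> normal_ s -> normal_ t.
Proof.
  intros H Hn u [t' [u' [H1 [H2 H3]]]]. apply (Hn u). exists t', u'. split; auto.
  eapply rst_trans; eauto.
Qed.

Section Inner.
Variable M : T.
Variable G0 : list T.
Hypothesis Houter : forall A, size A < size M -> cutP A.
Hypothesis Hid : forall G' N C, incl G0 G' -> nwf G' -> is_sequent Sg rules G' N ->
  E_ctx_over Sg (M :: G') C -> EQ N C -> der G' N.
Hypothesis Hpair : forall G' N P Q, M = Pair P Q -> incl G0 G' -> nwf G' -> is_sequent Sg rules G' N ->
  (forall G'', incl G' G'' -> nwf G'' -> der (P :: Q :: G'') N) -> der G' N.
Hypothesis Henc : forall G' N P K, M = Enc P K -> incl G0 G' -> nwf G' -> is_sequent Sg rules G' N ->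
  (forall G'', incl G' G'' -> nwf G'' -> der G'' K) ->
  (forall G'', incl G' G'' -> nwf G'' -> der (P :: K :: G'') N) -> der G' N.
Hypothesis Hblind1 : forall G' N P K, M = Blind P K -> incl G0 G' -> nwf G' -> is_sequent Sg rules G' N ->
  (forall G'', incl G' G'' -> nwf G'' -> der G'' K) ->
  (forall G'', incl G' G'' -> nwf G'' -> der (P :: K :: G'') N) -> der G' N.
Hypothesis Hsign : forall G' N P K L, M = Sign P K -> In (Pub L) G' -> ACQ K L ->
  incl G0 G' -> nwf G' -> is_sequent Sg rules G' N ->
  (forall G'', incl G' G'' -> nwf G'' -> der (P :: G'') N) -> der G' N.
Hypothesis Hpub : forall G' N P K L, M = Pub L -> In (Sign P K) G' -> ACQ K L ->
  incl G0 G' -> nwf G' -> is_sequent Sg rules G' N ->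
  (forall G'', incl G' G'' -> nwf G'' -> der (P :: G'') N) -> der G' N.
Hypothesis Hblind2 : forall G' N P R K, M = Sign (Blind P R) K -> incl G0 G' -> nwf G' -> is_sequent Sg rules G' N ->
  wf_term (Sign P K) /\ normal_ (Sign P K) ->
  (forall G'', incl G' G'' -> nwf G'' -> der G'' R) ->
  (forall G'', incl G' G'' -> nwf G'' -> der (Sign P K :: R :: G'') N) -> der G' N.

Lemma inner Gm N : der Gm N -> forall G', incl G0 G' -> nwf G' -> incl Gm (M :: G') -> der G' N.
Proof.
  induction 1 as [G M0 C Hs Hc He|G M0 N Hb Hs D1 IH1 D2 IH2|G P Q U Hs Hin D IH|G P Q Hs D1 IH1 D2 IH2
    |G P K N Hs Hin D1 IH1 D2 IH2|G P K Hs D1 IH1 D2 IH2|G P K L N Hs Hin Hin2 Hac D IH|G P K Hs D1 IH1 D2 IH2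
    |G P K N Hs Hin D1 IH1 D2 IH2|G P K Hs D1 IH1 D2 IH2|G P R K N Hs Hin D1 IH1 D2 IH2
    |G A N Hs Hg Hex D1 IH1 D2 IH2]; intros G' Hi Hn HG.
  - eapply Hid; eauto. seqt. eapply ectx_mono; eauto.
  - discriminate.
  - assert (HPQ := seq_ctx (der_seq D)).
    destruct (HG _ Hin) as [HMe|Hin'].
    + eapply Hpair; eauto. seqt. intros G'' Hi' Hn'. apply IH; [inc | eapply nwf_app2; eauto | inc].
    + eapply d_pL with (M := P) (N := Q); [seqt | auto | ]. apply IH; [inc | eapply nwf_app2; eauto | inc].
  - apply d_pR; [seqt | apply IH1 | apply IH2]; auto.
  - assert (HPQ := seq_ctx (der_seq D2)).
    destruct (HG _ Hin) as [HMe|Hin'].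
    + eapply Henc; eauto. seqt. intros G'' Hi' Hn'. apply IH1; [inc | auto | inc].
      intros G'' Hi' Hn'. apply IH2; [inc | eapply nwf_app2; eauto | inc].
    + eapply d_eL with (M := P) (K := K); [seqt | auto | apply IH1; auto | ]. apply IH2; [inc | eapply nwf_app2; eauto | inc].
  - apply d_eR; [seqt | apply IH1 | apply IH2]; auto.
  - assert (HPQ := seq_ctx (der_seq D)).
    destruct (HG _ Hin) as [HMe|Hin'].
    + destruct (HG _ Hin2) as [Habs|Hin2']; [rewrite HMe in Habs; discriminate|].
      eapply Hsign; eauto. seqt. intros G'' Hi' Hn'. apply IH; [inc | eapply nwf_app1; eauto | inc].
    + destruct (HG _ Hin2) as [HMe|Hin2'].
      * eapply Hpub; eauto. seqt. intros G'' Hi' Hn'. apply IH; [inc | eapply nwf_app1; eauto | inc].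
      * eapply d_signL with (M := P) (K := K) (L := L); [seqt | auto | auto | auto | ].
        apply IH; [inc | eapply nwf_app1; eauto | inc].
  - apply d_signR; [seqt | apply IH1 | apply IH2]; auto.
  - assert (HPQ := seq_ctx (der_seq D2)).
    destruct (HG _ Hin) as [HMe|Hin'].
    + eapply Hblind1; eauto. seqt. intros G'' Hi' Hn'. apply IH1; [inc | auto | inc].
      intros G'' Hi' Hn'. apply IH2; [inc | eapply nwf_app2; eauto | inc].
    + eapply d_blindL1 with (M := P) (K := K); [seqt | auto | apply IH1; auto | ].
      apply IH2; [inc | eapply nwf_app2; eauto | inc].
  - apply d_blindR; [seqt | apply IH1 | apply IH2]; auto.
  - assert (HPQ := seq_ctx (der_seq D2)).
    destruct (HG _ Hin) as [HMe|Hin'].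
    + eapply Hblind2; eauto. seqt. exact (Forall_inv HPQ).
      intros G'' Hi' Hn'. apply IH1; [inc | auto | inc].
      intros G'' Hi' Hn'. apply IH2; [inc | eapply nwf_app2; eauto | inc].
    + eapply d_blindL2 with (M := P) (K := K) (R := R); [seqt | auto | apply IH1; auto | ].
      apply IH2; [inc | eapply nwf_app2; eauto | inc].
  - assert (HA := seq_ctx (der_seq D2)).
    destruct Hex as [u [Hu Hsu]].
    assert (Hu' : u = M \/ In u (N :: G')).
    { destruct Hu as [<-|Hu]; [right; left; auto|]. destruct (HG _ Hu); auto. right; right; auto. }
    destruct Hu' as [->|Hu'].
    + destruct (classic (A = M)) as [->|Hne].
      * apply IH2; auto. inc.
      * destruct (subterm_size Hsu) as [?|Hlt]; [contradiction|].
        apply (Houter Hlt (G := G')). apply IH1; auto.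
        apply IH2; [inc | eapply nwf_app1; eauto | inc].
    + eapply d_gs with (A := A); [seqt | auto | exists u; split; auto | apply IH1; auto | ].
      apply IH2; [inc | eapply nwf_app1; eauto | inc].
Qed.
End Inner.

Section Main.
Hypothesis Hterm : terminating_mod (R_E rules) (isAC Sg).
Hypothesis Hconf : confluent_mod (R_E rules) (isAC Sg).

Lemma acq_pair B a b : ACQ B (Pair a b) -> exists a' b', B = Pair a' b' /\ ACQ a' a /\ ACQ b' b.
Proof. intros H; apply ac_Q in H; destruct B; simpl in H; try contradiction; eauto. Qed.
Lemma acq_enc B a b : ACQ B (Enc a b) -> exists a' b', B = Enc a' b' /\ ACQ a' a /\ ACQ b' b.
Proof. intros H; apply ac_Q in H; destruct B; simpl in H; try contradiction; eauto. Qed.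
Lemma acq_sign B a b : ACQ B (Sign a b) -> exists a' b', B = Sign a' b' /\ ACQ a' a /\ ACQ b' b.
Proof. intros H; apply ac_Q in H; destruct B; simpl in H; try contradiction; eauto. Qed.
Lemma acq_blind B a b : ACQ B (Blind a b) -> exists a' b', B = Blind a' b' /\ ACQ a' a /\ ACQ b' b.
Proof. intros H; apply ac_Q in H; destruct B; simpl in H; try contradiction; eauto. Qed.
Lemma acq_pub B a : ACQ B (Pub a) -> exists a', B = Pub a' /\ ACQ a' a.
Proof. intros H; apply ac_Q in H; destruct B; simpl in H; try contradiction; eauto. Qed.

Lemma seq_in G N x : is_sequent Sg rules G N -> In x (N :: G) -> wf_term x /\ normal_ x.
Proof. intros H Hi. unfold is_sequent in H. rewrite Forall_forall in H. auto. Qed.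

Lemma hid_R (M M1 M2 : T) (mk : T -> T -> T) G0 :
  M = mk M1 M2 ->
  (forall a b, guarded Sg (mk a b)) ->
  (forall B, ACQ B (mk M1 M2) -> exists B1 B2, B = mk B1 B2 /\ ACQ B1 M1 /\ ACQ B2 M2) ->
  (forall a b, subterm Sg a (mk a b) /\ subterm Sg b (mk a b)) ->
  size M1 < size M -> size M2 < size M ->
  (forall G X Y, is_sequent Sg rules G (mk X Y) -> der G X -> der G Y -> der G (mk X Y)) ->
  (forall A, size A < size M -> cutP A) ->
  wf_term M /\ normal_ M -> der G0 M1 -> der G0 M2 ->
  forall G' N C, incl G0 G' -> nwf G' -> is_sequent Sg rules G' N ->
    E_ctx_over Sg (M :: G') C -> EQ N C -> der G' N.
Proof.
  intros HM Hg Hinj Hsub Hs1 Hs2 Hrule Houter HMn D1 D2 G' N C Hi Hn HN Hc HE.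
  assert (HM1 : wf_term M1 /\ normal_ M1) by (eapply nwf_sub; [|exact HMn]; rewrite HM; apply Hsub).
  assert (HM2 : wf_term M2 /\ normal_ M2) by (eapply nwf_sub; [|exact HMn]; rewrite HM; apply Hsub).
  assert (D1' : der G' M1) by (eapply weaken; eauto).
  assert (D2' : der G' M2) by (eapply weaken; eauto).
  destruct (classic (exists u B, In u (N :: G') /\ subterm Sg B u /\ guarded Sg B /\ EQ B M))
    as [[u [B [Hu [HB [HgB HBM]]]]]|Hno].
  - assert (HBn : wf_term B /\ normal_ B) by (apply nwf_sub with u; auto; eapply seq_in; eauto).
    assert (HBac : ACQ B M) by (apply conf_normal; tauto).
    assert (HBM' := HBac). rewrite HM in HBac. destruct (Hinj _ HBac) as [B1 [B2 [-> [H1 H2]]]].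
    assert (HB1 : wf_term B1 /\ normal_ B1) by (eapply nwf_sub; [|exact HBn]; apply Hsub).
    assert (HB2 : wf_term B2 /\ normal_ B2) by (eapply nwf_sub; [|exact HBn]; apply Hsub).
    assert (E1 : der G' B1).
    { apply (Houter _ Hs1 G' B1); auto.
      eapply id_eq with (X := M1); [left; auto | apply ac_E; auto | apply nwf_cons; auto | auto]. }
    assert (E2 : der G' B2).
    { apply (Houter _ Hs2 G' B2); auto.
      eapply id_eq with (X := M2); [left; auto | apply ac_E; auto | apply nwf_cons; auto | auto]. }
    assert (EB : der G' (mk B1 B2)) by (apply Hrule; auto; apply mk_seq; auto).
    destruct (@ctx_subst M G' (mk B1 B2 :: G') C (mk B1 B2) Hc) as [C' [HC' HCC']].
    { apply ec_hole; left; auto. } { apply ac_E; auto. } { inc. }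
    eapply d_gs with (A := mk B1 B2); [seqt | apply Hg | exists u; split; auto | exact EB | ].
    eapply d_id with (C := C'); [apply mk_seq; [eapply seq_goal; eauto| apply nwf_cons; auto] | exact HC' |].
    eapply cong_trans; eauto.
  - assert (Hid_g : forall g, In g (N :: G') -> phi M M1 g = g).
    { intros g Hg'. apply phi_id. intros B HB HgB HBM. apply Hno. exists g, B; auto. }
    assert (HgM : guarded Sg M) by (rewrite HM; apply Hg).
    assert (Hc' := @phi_ctx M M1 G' C Hc (fun g Hg' => Hid_g g (or_intror Hg')) HgM).
    assert (HE' := phi_E M M1 HE). rewrite (Hid_g N (or_introl eq_refl)) in HE'.
    apply (Houter _ Hs1 G' N); auto.
    eapply d_id; [apply mk_seq; [eapply seq_goal; eauto| apply nwf_cons; auto] | exact Hc' | exact HE'].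
Qed.

Lemma alien M G0 C0 : nwf G0 -> E_ctx_over Sg G0 C0 -> EQ M C0 -> guarded Sg M -> wf_term M /\ normal_ M ->
  exists g B, In g G0 /\ subterm Sg B g /\ guarded Sg B /\ ACQ B M.
Proof.
  intros Hn Hc HE Hg HMn. apply NNPP. intros Hno.
  assert (Hid_g : forall dd g, In g G0 -> phi M dd g = g).
  { intros dd g Hg'. apply phi_id. intros B HB HgB HBM. apply Hno. exists g, B; repeat split; auto.
    assert (HBn : wf_term B /\ normal_ B) by (apply nwf_sub with g; auto; eapply nwf_In; eauto).
    apply conf_normal; auto; tauto. }
  assert (E : forall dd, EQ dd C0).
  { intros dd. pose proof (phi_E M dd HE) as H. rewrite phi_M in H by auto.
    rewrite (@phi_ctx_id M dd G0 C0 Hc (Hid_g dd)) in H. exact H. }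
  assert (H01 : EQ (Name 0) (Name 1)) by (eapply cong_trans; [apply E| apply cong_sym, E]).
  apply conf_normal in H01; auto; try apply (name_normal Hterm). apply ac_Q in H01. simpl in H01. discriminate.
Qed.

Ltac nwfs := repeat (apply nwf_cons; [assumption|]); assumption.
Ltac stsolve := first [apply st_refl | apply st_pair1; stsolve | apply st_pair2; stsolve
   | apply st_enc1; stsolve | apply st_enc2; stsolve | apply st_sign1; stsolve | apply st_sign2; stsolve
   | apply st_blind1; stsolve | apply st_blind2; stsolve | apply st_pub; stsolve].
Ltac subnf H := eapply nwf_sub; [|exact H]; stsolve.

Lemma hpair_R M1 M2 G0 : (forall A, size A < size (Pair M1 M2) -> cutP A) ->
  wf_term (Pair M1 M2) /\ normal_ (Pair M1 M2) -> der G0 M1 -> der G0 M2 ->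
  forall G' N P Q, Pair M1 M2 = Pair P Q -> incl G0 G' -> nwf G' -> is_sequent Sg rules G' N ->
  (forall G'', incl G' G'' -> nwf G'' -> der (P :: Q :: G'') N) -> der G' N.
Proof.
  intros Houter HMn D1 D2 G' N P Q Heq Hi Hn HN F. injection Heq as <- <-.
  assert (HP : wf_term M1 /\ normal_ M1) by subnf HMn.
  assert (HQ : wf_term M2 /\ normal_ M2) by subnf HMn.
  assert (D := F G' (incl_refl _) Hn).
  apply (Houter M1 ltac:(simpl; lia) G' N). eapply weaken; eauto.
  apply (Houter M2 ltac:(simpl; lia) (M1 :: G') N). eapply weaken; eauto; [inc | nwfs].
  eapply weaken; [exact D | inc | nwfs].
Qed.

Lemma henc_R M1 M2 G0 : (forall A, size A < size (Enc M1 M2) -> cutP A) ->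
  wf_term (Enc M1 M2) /\ normal_ (Enc M1 M2) -> der G0 M1 -> der G0 M2 ->
  forall G' N P K, Enc M1 M2 = Enc P K -> incl G0 G' -> nwf G' -> is_sequent Sg rules G' N ->
  (forall G'', incl G' G'' -> nwf G'' -> der G'' K) ->
  (forall G'', incl G' G'' -> nwf G'' -> der (P :: K :: G'') N) -> der G' N.
Proof.
  intros Houter HMn D1 D2 G' N P Q Heq Hi Hn HN _ F. injection Heq as <- <-.
  assert (HP : wf_term M1 /\ normal_ M1) by subnf HMn.
  assert (HQ : wf_term M2 /\ normal_ M2) by subnf HMn.
  assert (D := F G' (incl_refl _) Hn).
  apply (Houter M1 ltac:(simpl; lia) G' N). eapply weaken; eauto.
  apply (Houter M2 ltac:(simpl; lia) (M1 :: G') N). eapply weaken; eauto; [inc | nwfs].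
  eapply weaken; [exact D | inc | nwfs].
Qed.

Lemma hblind1_R M1 M2 G0 : (forall A, size A < size (Blind M1 M2) -> cutP A) ->
  wf_term (Blind M1 M2) /\ normal_ (Blind M1 M2) -> der G0 M1 -> der G0 M2 ->
  forall G' N P K, Blind M1 M2 = Blind P K -> incl G0 G' -> nwf G' -> is_sequent Sg rules G' N ->
  (forall G'', incl G' G'' -> nwf G'' -> der G'' K) ->
  (forall G'', incl G' G'' -> nwf G'' -> der (P :: K :: G'') N) -> der G' N.
Proof.
  intros Houter HMn D1 D2 G' N P Q Heq Hi Hn HN _ F. injection Heq as <- <-.
  assert (HP : wf_term M1 /\ normal_ M1) by subnf HMn.
  assert (HQ : wf_term M2 /\ normal_ M2) by subnf HMn.
  assert (D := F G' (incl_refl _) Hn).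
  apply (Houter M1 ltac:(simpl; lia) G' N). eapply weaken; eauto.
  apply (Houter M2 ltac:(simpl; lia) (M1 :: G') N). eapply weaken; eauto; [inc | nwfs].
  eapply weaken; [exact D | inc | nwfs].
Qed.

Lemma hsign_R M1 M2 G0 : (forall A, size A < size (Sign M1 M2) -> cutP A) ->
  wf_term (Sign M1 M2) /\ normal_ (Sign M1 M2) -> der G0 M1 -> der G0 M2 ->
  forall G' N P K L, Sign M1 M2 = Sign P K -> In (Pub L) G' -> ACQ K L ->
  incl G0 G' -> nwf G' -> is_sequent Sg rules G' N ->
  (forall G'', incl G' G'' -> nwf G'' -> der (P :: G'') N) -> der G' N.
Proof.
  intros Houter HMn D1 D2 G' N P K L Heq _ _ Hi Hn HN F. injection Heq as <- <-.
  assert (D := F G' (incl_refl _) Hn).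
  apply (Houter M1 ltac:(simpl; lia) G' N); auto. eapply weaken; eauto.
Qed.

Lemma hblind2_R M1 M2 G0 : (forall A, size A < size (Sign M1 M2) -> cutP A) ->
  wf_term (Sign M1 M2) /\ normal_ (Sign M1 M2) -> der G0 M1 -> der G0 M2 ->
  forall G' N P R K, Sign M1 M2 = Sign (Blind P R) K -> incl G0 G' -> nwf G' -> is_sequent Sg rules G' N ->
  wf_term (Sign P K) /\ normal_ (Sign P K) ->
  (forall G'', incl G' G'' -> nwf G'' -> der G'' R) ->
  (forall G'', incl G' G'' -> nwf G'' -> der (Sign P K :: R :: G'') N) -> der G' N.
Proof.
  intros Houter HMn D1 D2 G' N P R K Heq Hi Hn HN HSPK F1 F2. injection Heq as -> ->.
  assert (HB : wf_term (Blind P R) /\ normal_ (Blind P R)) by subnf HMn.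
  assert (HP : wf_term P /\ normal_ P) by subnf HB.
  assert (HR : wf_term R /\ normal_ R) by subnf HB.
  assert (HK : wf_term K /\ normal_ K) by subnf HMn.
  assert (DR := F1 G' (incl_refl _) Hn).
  assert (DB : der G' (Blind P R)) by (eapply weaken; eauto).
  assert (DS : der G' (Sign P K)).
  { apply (Houter (Blind P R) ltac:(simpl; lia) G' (Sign P K)); auto.
    eapply d_blindL1 with (M := P) (K := R); [apply mk_seq; [auto|nwfs] | left; auto | apply F1; [inc|nwfs] | ].
    apply d_signR; [apply mk_seq; [auto|nwfs] | eapply id_eq; [left; auto | apply cong_refl | nwfs | auto] |].
    eapply weaken; eauto; [inc | nwfs]. }
  assert (D := F2 G' (incl_refl _) Hn).
  apply (Houter R ltac:(simpl; lia) G' N); auto.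
  apply (Houter (Sign P K) ltac:(simpl; lia) (R :: G') N); auto.
  eapply weaken; eauto; [inc | nwfs].
Qed.

Lemma swapX M X Y G N : (forall A, size A < size M -> cutP A) -> size X < size M -> In Y G -> ACQ X Y -> nwf G ->
  wf_term X /\ normal_ X -> der (X :: G) N -> der G N.
Proof.
  intros Houter Hs Hi Hac Hn HX D. apply (Houter X Hs G N); auto.
  eapply id_eq; eauto. apply ac_E; auto.
Qed.

Lemma useB M G0 C0 G' N B g : E_ctx_over Sg G0 C0 -> EQ M C0 -> incl G0 G' -> nwf G' -> is_sequent Sg rules G' N ->
  In g G0 -> subterm Sg B g -> guarded Sg B -> ACQ B M -> wf_term B /\ normal_ B -> der (B :: G') N -> der G' N.
Proof.
  intros Hc HE Hi Hn HN Hg HB HgB HBM HBn D.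
  eapply d_gs with (A := B); [auto | auto | exists g; split; [right; auto | auto] | | exact D].
  eapply d_id with (C := C0); [apply mk_seq; auto | eapply ectx_mono; eauto | ].
  eapply cong_trans; [apply ac_E; eauto | auto].
Qed.

Section IH.
Variables (M : T) (G0 : list T) (C0 : T).
Hypothesis Houter : forall A, size A < size M -> cutP A.
Hypothesis HMn : wf_term M /\ normal_ M.
Hypothesis HG0 : nwf G0.
Hypothesis Hc0 : E_ctx_over Sg G0 C0.
Hypothesis HMC0 : EQ M C0.

Lemma hid_I G' N C : incl G0 G' -> nwf G' -> is_sequent Sg rules G' N ->
  E_ctx_over Sg (M :: G') C -> EQ N C -> der G' N.
Proof.
  intros Hi Hn HN Hc HE.
  destruct (@ctx_subst M G' G' C C0 Hc) as [C' [HC' HCC']].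
  { eapply ectx_mono; eauto. } { apply cong_sym; auto. } { inc. }
  eapply d_id with (C := C'); eauto. eapply cong_trans; eauto.
Qed.

Lemma getB : guarded Sg M -> exists g B, In g G0 /\ subterm Sg B g /\ guarded Sg B /\ ACQ B M /\
  wf_term B /\ normal_ B.
Proof.
  intros Hg. destruct (alien HG0 Hc0 HMC0 Hg HMn) as [g [B [H1 [H2 [H3 H4]]]]].
  exists g, B; repeat split; auto; eapply nwf_sub; eauto; eapply nwf_In; eauto.
Qed.

Lemma hpair_I G' N P Q : M = Pair P Q -> incl G0 G' -> nwf G' -> is_sequent Sg rules G' N ->
  (forall G'', incl G' G'' -> nwf G'' -> der (P :: Q :: G'') N) -> der G' N.
Proof.
  intros HMe Hi Hn HN F.
  destruct getB as [g [B [Hg [HB [HgB [HBM HBn]]]]]]. rewrite HMe; exact I.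
  assert (HMn' := HMn). rewrite HMe in HMn', HBM.
  destruct (acq_pair HBM) as [P' [Q' [-> [HP HQ]]]].
  apply (useB (M := M) Hc0 HMC0 Hi Hn HN Hg HB HgB); [rewrite HMe; exact HBM | exact HBn | ].
  assert (HPn : wf_term P /\ normal_ P) by subnf HMn'.
  assert (HQn : wf_term Q /\ normal_ Q) by subnf HMn'.
  assert (HPn' : wf_term P' /\ normal_ P') by subnf HBn.
  assert (HQn' : wf_term Q' /\ normal_ Q') by subnf HBn.
  eapply d_pL with (M := P') (N := Q'); [apply mk_seq; [eapply seq_goal; eauto | nwfs] | left; auto | ].
  assert (D := F (P' :: Q' :: Pair P' Q' :: G') ltac:(inc) ltac:(nwfs)).
  apply (@swapX M Q Q' _ N Houter); [rewrite HMe; simpl; lia | simpl; auto | apply rst_sym; auto | nwfs | auto | ].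
  apply (@swapX M P P' _ N Houter); [rewrite HMe; simpl; lia | simpl; auto | apply rst_sym; auto | nwfs | auto | ].
  exact D.
Qed.

Lemma henc_I G' N P K : M = Enc P K -> incl G0 G' -> nwf G' -> is_sequent Sg rules G' N ->
  (forall G'', incl G' G'' -> nwf G'' -> der G'' K) ->
  (forall G'', incl G' G'' -> nwf G'' -> der (P :: K :: G'') N) -> der G' N.
Proof.
  intros HMe Hi Hn HN F1 F2.
  destruct getB as [g [B [Hg [HB [HgB [HBM HBn]]]]]]. rewrite HMe; exact I.
  assert (HMn' := HMn). rewrite HMe in HMn', HBM.
  destruct (acq_enc HBM) as [P' [K' [-> [HP HK]]]].
  apply (useB (M := M) Hc0 HMC0 Hi Hn HN Hg HB HgB); [rewrite HMe; exact HBM | exact HBn | ].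
  assert (HPn : wf_term P /\ normal_ P) by subnf HMn'.
  assert (HKn : wf_term K /\ normal_ K) by subnf HMn'.
  assert (HPn' : wf_term P' /\ normal_ P') by subnf HBn.
  assert (HKn' : wf_term K' /\ normal_ K') by subnf HBn.
  eapply d_eL with (M := P') (K := K'); [apply mk_seq; [eapply seq_goal; eauto | nwfs] | left; auto | | ].
  - assert (D := F1 (Enc P' K' :: G') ltac:(inc) ltac:(nwfs)).
    apply (@Houter K ltac:(rewrite HMe; simpl; lia) _ K' D).
    eapply id_eq; [left; auto | apply ac_E; auto | nwfs | auto].
  - assert (D := F2 (P' :: K' :: Enc P' K' :: G') ltac:(inc) ltac:(nwfs)).
    apply (@swapX M K K' _ N Houter); [rewrite HMe; simpl; lia | simpl; auto | apply rst_sym; auto | nwfs | auto | ].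
    apply (@swapX M P P' _ N Houter); [rewrite HMe; simpl; lia | simpl; auto | apply rst_sym; auto | nwfs | auto | ].
    exact D.
Qed.

Lemma hblind1_I G' N P K : M = Blind P K -> incl G0 G' -> nwf G' -> is_sequent Sg rules G' N ->
  (forall G'', incl G' G'' -> nwf G'' -> der G'' K) ->
  (forall G'', incl G' G'' -> nwf G'' -> der (P :: K :: G'') N) -> der G' N.
Proof.
  intros HMe Hi Hn HN F1 F2.
  destruct getB as [g [B [Hg [HB [HgB [HBM HBn]]]]]]. rewrite HMe; exact I.
  assert (HMn' := HMn). rewrite HMe in HMn', HBM.
  destruct (acq_blind HBM) as [P' [K' [-> [HP HK]]]].
  apply (useB (M := M) Hc0 HMC0 Hi Hn HN Hg HB HgB); [rewrite HMe; exact HBM | exact HBn | ].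
  assert (HPn : wf_term P /\ normal_ P) by subnf HMn'.
  assert (HKn : wf_term K /\ normal_ K) by subnf HMn'.
  assert (HPn' : wf_term P' /\ normal_ P') by subnf HBn.
  assert (HKn' : wf_term K' /\ normal_ K') by subnf HBn.
  eapply d_blindL1 with (M := P') (K := K'); [apply mk_seq; [eapply seq_goal; eauto | nwfs] | left; auto | | ].
  - assert (D := F1 (Blind P' K' :: G') ltac:(inc) ltac:(nwfs)).
    apply (@Houter K ltac:(rewrite HMe; simpl; lia) _ K' D).
    eapply id_eq; [left; auto | apply ac_E; auto | nwfs | auto].
  - assert (D := F2 (P' :: K' :: Blind P' K' :: G') ltac:(inc) ltac:(nwfs)).
    apply (@swapX M K K' _ N Houter); [rewrite HMe; simpl; lia | simpl; auto | apply rst_sym; auto | nwfs | auto | ].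
    apply (@swapX M P P' _ N Houter); [rewrite HMe; simpl; lia | simpl; auto | apply rst_sym; auto | nwfs | auto | ].
    exact D.
Qed.

Lemma hsign_I G' N P K L : M = Sign P K -> In (Pub L) G' -> ACQ K L ->
  incl G0 G' -> nwf G' -> is_sequent Sg rules G' N ->
  (forall G'', incl G' G'' -> nwf G'' -> der (P :: G'') N) -> der G' N.
Proof.
  intros HMe HinP HKL Hi Hn HN F.
  destruct getB as [g [B [Hg [HB [HgB [HBM HBn]]]]]]. rewrite HMe; exact I.
  assert (HMn' := HMn). rewrite HMe in HMn', HBM.
  destruct (acq_sign HBM) as [P' [K' [-> [HP HK]]]].
  apply (useB (M := M) Hc0 HMC0 Hi Hn HN Hg HB HgB); [rewrite HMe; exact HBM | exact HBn | ].
  assert (HPn : wf_term P /\ normal_ P) by subnf HMn'.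
  assert (HPn' : wf_term P' /\ normal_ P') by subnf HBn.
  eapply d_signL with (M := P') (K := K') (L := L); [apply mk_seq; [eapply seq_goal; eauto | nwfs] | left; auto
    | right; auto | eapply rst_trans; eauto | ].
  assert (D := F (P' :: Sign P' K' :: G') ltac:(inc) ltac:(nwfs)).
  apply (@swapX M P P' _ N Houter); [rewrite HMe; simpl; lia | simpl; auto | apply rst_sym; auto | nwfs | auto | ].
  exact D.
Qed.

Lemma hpub_I G' N P K L : M = Pub L -> In (Sign P K) G' -> ACQ K L ->
  incl G0 G' -> nwf G' -> is_sequent Sg rules G' N ->
  (forall G'', incl G' G'' -> nwf G'' -> der (P :: G'') N) -> der G' N.
Proof.
  intros HMe HinS HKL Hi Hn HN F.
  destruct getB as [g [B [Hg [HB [HgB [HBM HBn]]]]]]. rewrite HMe; exact I.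
  rewrite HMe in HBM.
  destruct (acq_pub HBM) as [L' [-> HL]].
  apply (useB (M := M) Hc0 HMC0 Hi Hn HN Hg HB HgB); [rewrite HMe; exact HBM | exact HBn | ].
  eapply d_signL with (M := P) (K := K) (L := L'); [apply mk_seq; [eapply seq_goal; eauto | nwfs] | right; auto
    | left; auto | eapply rst_trans; [eauto| apply rst_sym; eauto] | ].
  apply F; [inc | nwfs].
Qed.

Lemma hblind2_I G' N P R K : M = Sign (Blind P R) K -> incl G0 G' -> nwf G' -> is_sequent Sg rules G' N ->
  wf_term (Sign P K) /\ normal_ (Sign P K) ->
  (forall G'', incl G' G'' -> nwf G'' -> der G'' R) ->
  (forall G'', incl G' G'' -> nwf G'' -> der (Sign P K :: R :: G'') N) -> der G' N.
Proof.
  intros HMe Hi Hn HN HSPK F1 F2.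
  destruct getB as [g [B [Hg [HB [HgB [HBM HBn]]]]]]. rewrite HMe; exact I.
  assert (HMn' := HMn). rewrite HMe in HMn', HBM.
  destruct (acq_sign HBM) as [B1 [K' [-> [HB1 HK]]]].
  destruct (acq_blind HB1) as [P' [R' [-> [HP HR]]]].
  apply (useB (M := M) Hc0 HMC0 Hi Hn HN Hg HB HgB); [rewrite HMe; exact HBM | exact HBn | ].
  assert (HRn : wf_term R /\ normal_ R) by subnf HMn'.
  assert (HPn' : wf_term P' /\ normal_ P') by subnf HBn.
  assert (HKn' : wf_term K' /\ normal_ K') by subnf HBn.
  assert (HRn' : wf_term R' /\ normal_ R') by subnf HBn.
  assert (HSac : ACQ (Sign P K) (Sign P' K')) by (apply cong_sign; apply rst_sym; auto).
  assert (HSn' : wf_term (Sign P' K') /\ normal_ (Sign P' K')).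
  { split. constructor; tauto. eapply normal_ac; eauto. tauto. }
  eapply d_blindL2 with (M := P') (R := R') (K := K'); [apply mk_seq; [eapply seq_goal; eauto | nwfs] | left; auto | | ].
  - assert (D := F1 (Sign (Blind P' R') K' :: G') ltac:(inc) ltac:(nwfs)).
    apply (@Houter R ltac:(rewrite HMe; simpl; lia) _ R' D).
    eapply id_eq; [left; auto | apply ac_E; auto | nwfs | auto].
  - assert (D := F2 (Sign P' K' :: R' :: Sign (Blind P' R') K' :: G') ltac:(inc) ltac:(nwfs)).
    apply (@swapX M R R' _ N Houter); [rewrite HMe; simpl; lia | simpl; auto | apply rst_sym; auto | nwfs | auto | ].
    apply (@swapX M (Sign P K) (Sign P' K') _ N Houter); [rewrite HMe; simpl; lia | simpl; auto | auto | nwfs | auto | ].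
    exact D.
Qed.
End IH.

Ltac disc := intros; match goal with H : _ = _ |- _ => discriminate H end.

Lemma cut_step M : (forall A, size A < size M -> cutP A) -> cutP M.
Proof.
  intros Houter G N D1 D2.
  assert (Hmid : forall G0 M0, der G0 M0 -> M0 = M -> forall Gm N, der Gm N -> incl Gm (M :: G0) -> der G0 N).
  2: { apply (Hmid G M D1 eq_refl (M :: G) N D2). apply incl_refl. }
  clear G N D1 D2.
  induction 1 as [G0 M0 C Hs Hc He|G0 M0 N Hb Hs D1 IH1 D2 IH2|G0 P Q U Hs Hin D IH|G0 P Q Hs D1 IH1 D2 IH2
    |G0 P K U Hs Hin D1 IH1 D2 IH2|G0 P K Hs D1 IH1 D2 IH2|G0 P K L U Hs Hin Hin2 Hac D IH|G0 P K Hs D1 IH1 D2 IH2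
    |G0 P K U Hs Hin D1 IH1 D2 IH2|G0 P K Hs D1 IH1 D2 IH2|G0 P R K U Hs Hin D1 IH1 D2 IH2
    |G0 A M0 Hs Hg Hex D1 IH1 D2 IH2]; intros HMe Gm N' D2' HG;
  assert (HN' := seq_goal (der_seq D2')); assert (HG0 := seq_ctx Hs); assert (HMn := seq_goal Hs).
  - subst M0.
    eapply inner; [exact Houter | | | | | | | | exact D2' | apply incl_refl | exact HG0 | exact HG].
    + intros; eapply (hid_I (G0 := G0) (C0 := C)); eauto.
    + intros; eapply (hpair_I (G0 := G0) (C0 := C)); eauto.
    + intros; eapply (henc_I (G0 := G0) (C0 := C)); eauto.
    + intros; eapply (hblind1_I (G0 := G0) (C0 := C)); eauto.
    + intros; eapply (hsign_I (G0 := G0) (C0 := C)); eauto.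
    + intros; eapply (hpub_I (G0 := G0) (C0 := C)); eauto.
    + intros; eapply (hblind2_I (G0 := G0) (C0 := C)); eauto.
  - discriminate.
  - subst U. eapply d_pL with (M := P) (N := Q); [apply mk_seq; auto | auto | ].
    apply (IH eq_refl Gm N' D2'); inc.
  - subst M. rename Houter into Ho.
    eapply inner; [exact Ho | | | | | | | | exact D2' | apply incl_refl | exact HG0 | exact HG].
    + intros; eapply (@hid_R _ P Q (@Pair _)); eauto; try (simpl; lia); first [intros; exact I | let B0 := fresh in let HB0 := fresh in intros B0 HB0; apply acq_pair in HB0; exact HB0 | intros; split; stsolve | intros; apply d_pR; auto].
    + intros; eapply hpair_R; eauto.
    + disc. + disc. + disc. + disc. + disc.
  - subst U. eapply d_eL with (M := P) (K := K); [apply mk_seq; auto | auto | exact D1 | ].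
    apply (IH2 eq_refl Gm N' D2'); inc.
  - subst M. rename Houter into Ho.
    eapply inner; [exact Ho | | | | | | | | exact D2' | apply incl_refl | exact HG0 | exact HG].
    + intros; eapply (@hid_R _ P K (@Enc _)); eauto; try (simpl; lia); first [intros; exact I | let B0 := fresh in let HB0 := fresh in intros B0 HB0; apply acq_enc in HB0; exact HB0 | intros; split; stsolve | intros; apply d_eR; auto].
    + disc.
    + intros; eapply henc_R; eauto.
    + disc. + disc. + disc. + disc.
  - subst U. eapply d_signL with (M := P) (K := K) (L := L); [apply mk_seq; auto | auto | auto | auto | ].
    apply (IH eq_refl Gm N' D2'); inc.
  - subst M. rename Houter into Ho.
    eapply inner; [exact Ho | | | | | | | | exact D2' | apply incl_refl | exact HG0 | exact HG].
    + intros; eapply (@hid_R _ P K (@Sign _)); eauto; try (simpl; lia); first [intros; exact I | let B0 := fresh in let HB0 := fresh in intros B0 HB0; apply acq_sign in HB0; exact HB0 | intros; split; stsolve | intros; apply d_signR; auto].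
    + disc. + disc. + disc.
    + intros; eapply hsign_R; eauto.
    + disc.
    + intros; eapply hblind2_R; eauto.
  - subst U. eapply d_blindL1 with (M := P) (K := K); [apply mk_seq; auto | auto | exact D1 | ].
    apply (IH2 eq_refl Gm N' D2'); inc.
  - subst M. rename Houter into Ho.
    eapply inner; [exact Ho | | | | | | | | exact D2' | apply incl_refl | exact HG0 | exact HG].
    + intros; eapply (@hid_R _ P K (@Blind _)); eauto; try (simpl; lia); first [intros; exact I | let B0 := fresh in let HB0 := fresh in intros B0 HB0; apply acq_blind in HB0; exact HB0 | intros; split; stsolve | intros; apply d_blindR; auto].
    + disc. + disc.
    + intros; eapply hblind1_R; eauto.
    + disc. + disc. + disc.
  - subst U. eapply d_blindL2 with (M := P) (K := K) (R := R); [apply mk_seq; auto | auto | exact D1 | ].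
    apply (IH2 eq_refl Gm N' D2'); inc.
  - subst M0.
    assert (DA : der (A :: G0) N') by (apply (IH2 eq_refl Gm N' D2'); inc).
    destruct Hex as [u [[<-|Hu] Hsu]].
    + destruct (classic (A = M)) as [->|Hne].
      * apply (IH1 eq_refl Gm N' D2'); inc.
      * destruct (subterm_size Hsu) as [?|Hlt]; [contradiction|].
        exact (Houter A Hlt G0 N' D1 DA).
    + eapply d_gs with (A := A); [apply mk_seq; auto | auto | exists u; split; [right|]; auto | exact D1 | exact DA].
Qed.

Lemma cut_adm M : cutP M.
Proof.
  induction M as [M IH] using (well_founded_induction (well_founded_ltof _ size)).
  apply cut_step. intros A H; apply IH; exact H.
Qed.

Lemma elim b G M : derivable Sg rules b G M -> der G M.
Proof.
  induction 1.
  - eapply d_id; eauto.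
  - eapply cut_adm; eauto.
  - eapply d_pL; eauto.
  - eapply d_pR; eauto.
  - eapply d_eL; eauto.
  - eapply d_eR; eauto.
  - eapply d_signL; eauto.
  - eapply d_signR; eauto.
  - eapply d_blindL1; eauto.
  - eapply d_blindR; eauto.
  - eapply d_blindL2; eauto.
  - eapply d_gs; eauto.
Qed.
End Main.
End Cut.

Unset Implicit Arguments.

Theorem theorem1 (S : signature) (n : nat) (rules : list (pat (sym S) * pat (sym S)))
    (HE : admissible_theory S n rules) (G : list (term (sym S))) (M : term (sym S)) :
  derivable S rules true G M -> derivable S rules false G M.
Proof.
  destruct HE as [_ [_ [_ [_ [_ [Hterm Hconf]]]]]].
  apply (elim Hterm Hconf).
Qed.
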